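(* Let $a_2,a_3$ be integers with $1<a_2<a_3$, $A=\{1,a_2,a_3\}$, and write $a_3=C_2a_2+C_1$ with $0\le C_1<a_2$. If $a_2\ge 2C_1\ge a_2-2C_2+1$, then the fundamental stride generator for $A$ is of order $0$ or $1$.
   Context: For integers $n$ and $i\ge 0$, an integer $x$ has an $n$-generation of order $i$ if there are integers $c_1,c_2\ge 0$ with $x+ia_3=c_2a_2+c_1$ and $c_1+c_2\le n+i$. For integers $n$ and $p\ge0$, $SG(A,n,p)$ is a stride generator (of order $p$) if: (A) every integer $0\le x<a_3$ has an $n$-generation of some order $\le p$; (B) at least one integer $0\le x<a_3$ has no $n$-generation of order $<p$; (C) at least one integer $0\le y<a_3$ has no $(n-1)$-generation of any order $\le p+1$. A stride generator $SG(A,n,p)$ is the fundamental stride generator for $A$ if there is no stride generator $SG(A,n',p')$ with $n'>n$. *)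

(* Defs.v *)
From Stdlib Require Import ZArith Lia.
Open Scope Z_scope.

(* A = {1, a2, a3}. x has an n-generation of order i (i >= 0). *)
Definition has_ngen (a2 a3 n i x : Z) : Prop :=
  exists c1 c2 : Z, 0 <= c1 /\ 0 <= c2 /\
    x + i * a3 = c2 * a2 + c1 /\ c1 + c2 <= n + i.

Definition stride_generator (a2 a3 n p : Z) : Prop :=
  0 <= p /\
  (forall x, 0 <= x < a3 -> exists i, 0 <= i <= p /\ has_ngen a2 a3 n i x) /\
  (exists x, 0 <= x < a3 /\ forall i, 0 <= i < p -> ~ has_ngen a2 a3 n i x) /\
  (exists y, 0 <= y < a3 /\
     forall i, 0 <= i <= p + 1 -> ~ has_ngen a2 a3 (n - 1) i y).

Definition fundamental_SG (a2 a3 n p : Z) : Prop :=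
  stride_generator a2 a3 n p /\
  forall n' p', n' > n -> ~ stride_generator a2 a3 n' p'.

(* Main.v *)
Require Import Defs.
From Stdlib Require Import ZArith Lia Classical.
Open Scope Z_scope.

Definition fc (a2 m : Z) : Z := m / a2 + m mod a2.

Lemma fc_spec a2 Q R : 0 <= R < a2 -> fc a2 (Q * a2 + R) = Q + R.
Proof.
  intros H. unfold fc.
  rewrite <- (Z.div_unique_pos (Q*a2+R) a2 Q R H) by ring.
  rewrite <- (Z.mod_unique_pos (Q*a2+R) a2 Q R H) by ring. ring.
Qed.

Lemma gen_f a2 a3 n i x : 1 < a2 ->
  has_ngen a2 a3 n i x <-> (0 <= x + i*a3 /\ fc a2 (x + i*a3) <= n + i).
Proof.
  intros Ha. unfold has_ngen, fc. set (m := x + i*a3).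
  pose proof (Z.div_mod m a2 ltac:(lia)).
  pose proof (Z.mod_pos_bound m a2 ltac:(lia)).
  set (q := m / a2) in *. set (r := m mod a2) in *.
  split.
  - intros (c1 & c2 & H1 & H2 & H3 & H4).
    assert (c2 <= q) by nia. split; nia.
  - intros [H1 H2]. assert (0 <= q) by nia.
    exists r, q. repeat split; lia.
Qed.

Lemma argmax (h : Z -> Z) k : 0 <= k ->
  exists y, 0 <= y <= k /\ forall x, 0 <= x <= k -> h x <= h y.
Proof.
  intros Hk. pattern k. apply natlike_ind; [ | | exact Hk].
  - exists 0. split; [lia|]. intros x Hx. assert (x = 0) by lia. subst; lia.
  - intros j Hj [y [Hy Hm]].
    destruct (Z.le_gt_cases (h (Z.succ j)) (h y)).
    + exists y. split; [lia|]. intros x Hx.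
      destruct (Z.eq_dec x (Z.succ j)); [subst; lia|]. apply Hm; lia.
    + exists (Z.succ j). split; [lia|]. intros x Hx.
      destruct (Z.eq_dec x (Z.succ j)); [subst; lia|].
      specialize (Hm x ltac:(lia)). lia.
Qed.

Theorem lemma16 (a2 a3 C1 C2 : Z) :
  1 < a2 < a3 ->
  a3 = C2 * a2 + C1 -> 0 <= C1 < a2 ->
  a2 >= 2 * C1 -> 2 * C1 >= a2 - 2 * C2 + 1 ->
  forall n p : Z, fundamental_SG a2 a3 n p -> p = 0 \/ p = 1.
Proof.
  intros Ha Ha3 HC1 HC1b Hcond n p [[Hp [HA [HB HC']]] Hmax].
  assert (HC2 : 1 <= C2) by nia.
  assert (K : forall N x, 0 <= x -> has_ngen a2 a3 N 2 x -> has_ngen a2 a3 N 0 x).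
  { intros N x Hx G. apply gen_f in G; [|lia]. apply gen_f; [lia|].
    destruct G as [_ G]. split; [lia|]. replace (x + 0*a3) with x by ring.
    pose proof (Z.div_mod x a2 ltac:(lia)).
    pose proof (Z.mod_pos_bound x a2 ltac:(lia)).
    set (q := x / a2) in *. set (r := x mod a2) in *.
    assert (E0 : x = q*a2 + r) by lia.
    rewrite E0, fc_spec in * by lia.
    destruct (Z.lt_ge_cases (r + 2*C1) a2).
    - replace (q*a2 + r + 2*a3) with ((q+2*C2)*a2 + (r+2*C1)) in G by (rewrite Ha3; ring).
      rewrite fc_spec in G by lia. lia.
    - replace (q*a2 + r + 2*a3) with ((q+2*C2+1)*a2 + (r+2*C1-a2)) in G by (rewrite Ha3; ring).
      rewrite fc_spec in G by lia. lia. }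
  destruct (classic (p = 0 \/ p = 1)) as [|Hn]; [assumption|exfalso].
  set (h := fun x => Z.min (fc a2 x) (fc a2 (x + a3) - 1)).
  destruct HB as [x0 [Hx0 Hx0n]].
  assert (Hh0 : h x0 > n).
  { pose proof (Hx0n 0 ltac:(lia)) as G0. pose proof (Hx0n 1 ltac:(lia)) as G1.
    rewrite gen_f in G0, G1 by lia.
    replace (x0 + 0*a3) with x0 in G0 by ring. replace (x0 + 1*a3) with (x0+a3) in G1 by ring.
    unfold h. lia. }
  destruct (argmax h (a3 - 1) ltac:(lia)) as [y [Hy Hym]].
  set (N := h y) in *.
  assert (HN : N > n) by (specialize (Hym x0 ltac:(lia)); lia).
  assert (HCy : forall i, 0 <= i <= 1 -> ~ has_ngen a2 a3 (N - 1) i y).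
  { intros i Hi G. rewrite gen_f in G by lia. destruct G as [_ G].
    assert (i = 0 \/ i = 1) as [-> | ->] by lia.
    - replace (y + 0*a3) with y in G by ring. unfold N, h in *. lia.
    - replace (y + 1*a3) with (y+a3) in G by ring. unfold N, h in *. lia. }
  assert (HAx : forall x, 0 <= x < a3 ->
     has_ngen a2 a3 N 0 x \/ has_ngen a2 a3 N 1 x).
  { intros x Hx. specialize (Hym x ltac:(lia)). rewrite !gen_f by lia.
    replace (x + 0*a3) with x by ring. replace (x + 1*a3) with (x+a3) by ring.
    unfold N, h in *. lia. }
  destruct (classic (exists x, 0 <= x < a3 /\ fc a2 x > N)) as [[x1 [Hx1 Hf1]] | Hno].
  - apply (Hmax N 1 HN). split; [lia|]. split; [|split].
    + intros x Hx. destruct (HAx x Hx); [exists 0 | exists 1]; split; auto; lia.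
    + exists x1. split; [lia|]. intros i Hi G. assert (i = 0) by lia. subst i.
      rewrite gen_f in G by lia. replace (x1 + 0*a3) with x1 in G by ring. lia.
    + exists y. split; [lia|]. intros i Hi G.
      destruct (Z.eq_dec i 2) as [->|]. { apply K in G; [|lia]. apply (HCy 0); auto; lia. }
      apply (HCy i); auto; lia.
  - apply (Hmax N 0 HN). split; [lia|]. split; [|split].
    + intros x Hx. exists 0. split; [lia|]. rewrite gen_f by lia.
      replace (x + 0*a3) with x by ring. split; [lia|].
      destruct (Z.le_gt_cases (fc a2 x) N); [lia|]. exfalso; apply Hno; exists x; split; [assumption | lia].
    + exists 0. split; [lia|]. intros i Hi. lia.
    + exists y. split; [lia|]. intros i Hi G. apply (HCy i); auto; lia.
Qed.
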